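(* Let $R$ be a commutative ring with identity and $q(R)$ its classical ring of quotients. Then (1) $R$ is roughly reduced if and only if $q(R)$ is roughly reduced; (2) $R$ is roughly complemented if and only if $q(R)$ is roughly complemented.
   Context: For a ring $A$: $\mathfrak{N}(A)$ is the nilradical, $\mathrm{reg}(A)$ the regular elements, $q(A)$ the localization at $\mathrm{reg}(A)$, $\mathrm{areg}(A)=\{x: x+\mathfrak{N}(A)\in\mathrm{reg}(A/\mathfrak{N}(A))\}$, and $\eta(A)=\bigcup_{s\in\mathrm{areg}(A)}\mathrm{Ann}(s)$. $A$ is roughly reduced if $\eta(A)=\mathfrak{N}(A)$. $A$ is roughly complemented if for every $a\in A$ there is $b$ with $ab=0$ and $a+b\in\mathrm{areg}(A)$. *)

(* Defs.v *)
From HB Require Import structures.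
From mathcomp Require Import all_boot all_order all_algebra.
Set Implicit Arguments. Unset Strict Implicit. Unset Printing Implicit Defensive.
Import GRing.Theory.
Local Open Scope ring_scope.

Section Defs.
Variable A : comPzRingType.

Definition nilp (x : A) : Prop := exists n : nat, x ^+ n = 0.

Definition regular (x : A) : Prop := forall y : A, x * y = 0 -> y = 0.

(* areg(A) = { x | x + N(A) is regular in A/N(A) }, with the membership in
   reg(A/N(A)) unfolded: for all y, (x+N)(y+N) = 0 in A/N implies y+N = 0,
   i.e. x*y in N(A) implies y in N(A). *)
Definition areg (x : A) : Prop := forall y : A, nilp (x * y) -> nilp y.

Definition eta (y : A) : Prop := exists s : A, areg s /\ s * y = 0.

Definition roughly_reduced : Prop := forall y : A, eta y <-> nilp y.

Definition roughly_complemented : Prop :=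
  forall a : A, exists b : A, a * b = 0 /\ areg (a + b).

Definition is_unit (x : A) : Prop := exists y : A, x * y = 1.
End Defs.

(* (Q, f) is the classical ring of quotients q(R) of R: f : R -> Q is an
   injective ring morphism, images of regular elements of R are units of Q,
   and every element of Q has the form f(a) f(s)^-1 with s regular.
   This determines Q up to isomorphism over R (it is the localization of R
   at reg(R)). *)
Definition classical_quotient_ring (R Q : comPzRingType) (f : {rmorphism R -> Q}) : Prop :=
  [/\ injective f,
      (forall s : R, regular s -> is_unit (f s)) &
      (forall q : Q, exists a s : R, regular s /\ q * f s = f a)].

(* Main.v *)
Require Import Defs.
From mathcomp Require Import all_boot all_order all_algebra.
From Stdlib Require Import Setoid.
Import GRing.Theory.
Local Open Scope ring_scope.
Local Notation nilp := Defs.nilp.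

Section Gen.
Variable A : comPzRingType.

Lemma nilp_ge (x : A) n m : x ^+ n = 0 -> (n <= m)%N -> x ^+ m = 0.
Proof. by move=> h le; rewrite -(subnK le) exprD h mulr0. Qed.

Lemma nilpM (x y : A) : nilp x -> nilp (x * y).
Proof. by case=> n h; exists n; rewrite exprMn h mul0r. Qed.

Lemma nilpD (x y : A) : nilp x -> nilp y -> nilp (x + y).
Proof.
case=> m hm [n hn]; exists (m + n)%N; rewrite exprDn big1 // => i _.
case: (leqP n i) => hi.
  by rewrite (@nilp_ge y n i hn hi) mulr0 mul0rn.
rewrite (@nilp_ge x m _ hm) ?mul0r ?mul0rn //.
have := ltn_ord i; rewrite ltnS => _.
rewrite -(leq_add2r i) subnK; last by apply: leq_trans (ltnW hi) (leq_addl _ _).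
by rewrite leq_add2l ltnW.
Qed.

Lemma nilp_unit (x u v : A) : u * v = 1 -> (nilp (x * u) <-> nilp x).
Proof.
move=> uv; split=> h; last exact: nilpM.
by have := nilpM _ v h; rewrite -mulrA uv mulr1.
Qed.

Lemma areg_unit (x u v : A) : u * v = 1 -> (areg (x * u) <-> areg x).
Proof.
move=> uv; split=> h y hy.
  have : nilp (x * u * (v * y)) by rewrite mulrA -(mulrA x) uv mulr1.
  have uv' : v * u = 1 by rewrite mulrC.
  by move/h; rewrite (mulrC v) => /(nilp_unit _ _ _ uv').
rewrite -mulrA (mulrC u) in hy; have := h _ hy.
by move/(nilp_unit _ _ _ uv).
Qed.

Lemma regular1 : regular (1 : A).
Proof. by move=> y; rewrite mul1r. Qed.

Lemma nilp_sq (x z : A) : nilp (x * x * z) -> nilp (x * z).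
Proof.
case=> n h; exists (n + n)%N.
have -> : (x * z) ^+ (n + n) = (x * x * z) ^+ n * z ^+ n by rewrite exprD !exprMn mulrACA mulrA.
by rewrite h mul0r.
Qed.

Lemma key (a b s : A) : a * b = 0 -> areg (a * s + b) -> areg (a + b).
Proof.
move=> ab h z hz; apply: h.
have ha : nilp (a * z).
  apply: nilp_sq; have -> : a * a * z = (a + b) * z * a.
    by rewrite [RHS]mulrC mulrA mulrDr ab addr0.
  exact: nilpM.
have hb : nilp (b * z).
  apply: nilp_sq; have -> : b * b * z = (a + b) * z * b.
    by rewrite [RHS]mulrC mulrA mulrDr (mulrC b a) ab add0r.
  exact: nilpM.
rewrite mulrDl; apply: nilpD => //.
by rewrite mulrAC; apply: nilpM.
Qed.
End Gen.
Arguments nilpM {A x} y _.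
Arguments nilp_unit {A} x {u v} _.
Arguments areg_unit {A} x {u v} _.

Section Transfer.
Variables (R Q : comPzRingType) (f : {rmorphism R -> Q}).
Hypothesis H : classical_quotient_ring f.

Lemma finj : injective f. Proof. by case: H. Qed.
Lemma funit s : regular s -> exists v, f s * v = 1. Proof. by case: H => _ h _ /h. Qed.
Lemma fdec q : exists a s, regular s /\ q * f s = f a. Proof. by case: H => _ _ h. Qed.

Arguments funit {s} _.
Lemma f0 x : f x = 0 <-> x = 0.
Proof. split=> [h|->]; last exact: rmorph0. by apply: finj; rewrite h rmorph0. Qed.

Lemma nilpf x : nilp (f x) <-> nilp x.
Proof.
split=> -[n h]; exists n; last by rewrite -rmorphXn h rmorph0.
by apply/f0; rewrite rmorphXn.
Qed.

Lemma nilpq q a s : regular s -> q * f s = f a -> (nilp q <-> nilp a).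
Proof.
move=> rs e; have [v hv] := funit rs.
by rewrite -(nilp_unit _ hv) e nilpf.
Qed.

Arguments nilpq {q a s} _ _.
Lemma zeroq q a s : regular s -> q * f s = f a -> (q = 0 <-> a = 0).
Proof.
move=> rs e; have [v hv] := funit rs; rewrite -f0 -e; split=> [->|h]; first by rewrite mul0r.
by rewrite -(mulr1 q) -hv mulrA h mul0r.
Qed.

Arguments zeroq {q a s} _ _.
Lemma aregf x : areg (f x) <-> areg x.
Proof.
split=> h y hy.
  by apply/nilpf; apply: h; rewrite -rmorphM nilpf.
have [c [t [rt e]]] := fdec y.
apply/(nilpq rt e); have [v hv] := funit rt.
apply: h; apply/nilpf; rewrite rmorphM -e mulrA.
exact/(nilp_unit _ hv).
Qed.

Lemma aregq q a s : regular s -> q * f s = f a -> (areg q <-> areg a).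
Proof.
move=> rs e; have [v hv] := funit rs.
by rewrite -(areg_unit _ hv) e aregf.
Qed.

Arguments aregq {q a s} _ _.
Lemma etaq q a s : regular s -> q * f s = f a -> (eta q <-> eta a).
Proof.
move=> rs e; split.
  case=> t [ht htq]; have [b [t' [rt' e']]] := fdec t.
  exists b; split; first exact/(aregq rt' e').
  apply/f0; rewrite rmorphM -e -e' mulrACA htq.
  by rewrite mul0r.
case=> b [hb ba]; exists (f b); split; first exact/aregf.
apply/(zeroq (a := b * a) rs); last by rewrite ba.
by rewrite -mulrA e -rmorphM.
Qed.
Arguments etaq {q a s} _ _.
End Transfer.
Arguments fdec {R Q f} H q.
Arguments funit {R Q f} H {s} _.
Arguments f0 {R Q f} H x.
Arguments nilpq {R Q f} H {q a s} _ _.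
Arguments zeroq {R Q f} H {q a s} _ _.
Arguments aregq {R Q f} H {q a s} _ _.
Arguments etaq {R Q f} H {q a s} _ _.
Arguments aregf {R Q f} H x.

Theorem mainTheorem19 (R Q : comPzRingType) (f : {rmorphism R -> Q}) :
  classical_quotient_ring f ->
  (roughly_reduced R <-> roughly_reduced Q) /\
  (roughly_complemented R <-> roughly_complemented Q).
Proof.
move=> H.
have e1 y : f y * f 1 = f y by rewrite rmorph1 mulr1.
split; split=> h.
- move=> q; have [a [s [rs e]]] := fdec H q.
  by rewrite (etaq H rs e) (nilpq H rs e) h.
- move=> y; rewrite -(etaq H (@regular1 R) (e1 y)) -(nilpq H (@regular1 R) (e1 y)).
  exact: h.
- move=> q; have [a [s [rs e]]] := fdec H q.
  have [v hv] := funit H rs.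
  have [b [ab hab]] := h a.
  have qe : q = f a * v by rewrite -e -mulrA hv mulr1.
  exists (f b * v); split.
    by rewrite qe mulrACA -rmorphM ab rmorph0 mul0r.
  rewrite qe -mulrDl -rmorphD.
  have hv' : v * f s = 1 by rewrite mulrC.
  by rewrite (areg_unit _ hv') aregf.
- move=> a; have [q' [hq hreg]] := h (f a).
  have [b [s [rs e]]] := fdec H q'.
  exists b; split.
    apply/(f0 H); rewrite rmorphM -e mulrA hq mul0r //.
  apply: (@key _ a b s).
    apply/(f0 H); rewrite rmorphM -e mulrA hq mul0r //.
  apply/(aregq H rs (q := f a + q')) => //.
  by rewrite mulrDl e rmorphD rmorphM.
Qed.
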